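(* Let $P,Q$ be probability mass functions supported on $\{1,\dots,n\}$ (all masses positive) with $P\prec Q$. Let $f:(0,\infty)\to\mathbb R$ be convex and twice differentiable with $f(1)=0$, and let $q_{\max},q_{\min}$ be the maximal and minimal masses of $Q$. Then: (a) $$n\,e_f(nq_{\min},nq_{\max})(\|Q\|_2^2-\|P\|_2^2)\ge D_f(Q\|U_n)-D_f(P\|U_n)\ge n\,c_f(nq_{\min},nq_{\max})(\|Q\|_2^2-\|P\|_2^2)\ge0,$$ with equalities in the first two inequalities if $D_f=\chi^2$. (b) If moreover $q_{\max}/q_{\min}\le\rho$ for some $\rho\ge1$, then $0\le\|Q\|_2^2-\|P\|_2^2\le\frac{(\rho-1)^2}{4\rho n}$.
   Context: $U_n$ is the uniform distribution on $\{1,\dots,n\}$; $\|\cdot\|_2$ is the Euclidean norm of the probability vector. $P\prec Q$ ($P$ is majorized by $Q$) means that for each $k$, the sum of the $k$ largest masses of $P$ is at most that of $Q$. $D_f(P\|Q)=\sum_xQ(x)f(P(x)/Q(x))$; $\chi^2$ corresponds to $f(t)=(t-1)^2$. With $\mathcal I(\xi_1,\xi_2)=[\xi_1,\xi_2]\cap(0,\infty)$: $c_f(\xi_1,\xi_2)=\tfrac12\inf_{t\in\mathcal I}f''(t)$, $e_f(\xi_1,\xi_2)=\tfrac12\sup_{t\in\mathcal I}f''(t)$. *)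

(* Defs.v *)
From Stdlib Require Import Reals Lra List Permutation Sorted.
Import ListNotations.
Open Scope R_scope.

Definition lsum (l : list R) : R := fold_right Rplus 0 l.

Definition pos_pmf (n : nat) (P : list R) : Prop :=
  length P = n /\ Forall (fun x => 0 < x) P /\ lsum P = 1.

Definition unif (n : nat) : list R := repeat (1 / INR n) n.

Definition sqnorm2 (P : list R) : R := lsum (map (fun x => x * x) P).

Definition Df (f : R -> R) (P Q : list R) : R :=
  lsum (map (fun pq => snd pq * f (fst pq / snd pq)) (combine P Q)).

Definition decr_rearr (l s : list R) : Prop :=
  Permutation l s /\ Sorted (fun a b => b <= a) s.

Definition majorized (P Q : list R) : Prop :=
  forall sP sQ, decr_rearr P sP -> decr_rearr Q sQ ->
  forall k : nat, lsum (firstn k sP) <= lsum (firstn k sQ).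

Definition lmax (l : list R) : R := fold_right Rmax (hd 0 l) l.
Definition lmin (l : list R) : R := fold_right Rmin (hd 0 l) l.

Definition Iset (xi1 xi2 : R) (t : R) : Prop := xi1 <= t <= xi2 /\ 0 < t.

Definition is_glb (E : R -> Prop) (m : R) : Prop :=
  (forall x, E x -> m <= x) /\ (forall b, (forall x, E x -> b <= x) -> b <= m).

(* c_f = 1/2 inf_{t in I} f''(t);  e_f = 1/2 sup_{t in I} f''(t).
   Stated as relations: c is c_f / e is e_f (sup possibly infinite: then no e). *)
Definition is_cf (f2 : R -> R) (xi1 xi2 c : R) : Prop :=
  is_glb (fun y => exists t, Iset xi1 xi2 t /\ y = f2 t) (2 * c).
Definition is_ef (f2 : R -> R) (xi1 xi2 e : R) : Prop :=
  is_lub (fun y => exists t, Iset xi1 xi2 t /\ y = f2 t) (2 * e).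

Definition convex_pos (f : R -> R) : Prop :=
  forall x y t, 0 < x -> 0 < y -> 0 <= t <= 1 ->
    f (t * x + (1 - t) * y) <= t * f x + (1 - t) * f y.

(* Main.v *)
Require Import Defs.
From Stdlib Require Import Reals Lra Lia List Permutation Sorted.
Import ListNotations.
Open Scope R_scope.

Lemma lsum_app l1 l2 : lsum (l1 ++ l2) = lsum l1 + lsum l2.
Proof. induction l1; simpl; [ring| rewrite IHl1; ring]. Qed.

Lemma lsum_perm l l' : Permutation l l' -> lsum l = lsum l'.
Proof. induction 1; simpl; lra. Qed.

Lemma lsum_lin (h : R -> R) (al be ga de : R) l :
  lsum (map (fun x => al * h x + be * (x*x) + ga * x + de) l) =
  al * lsum (map h l) + be * sqnorm2 l + ga * lsum l + de * INR (length l).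
Proof.
  unfold sqnorm2; induction l; [simpl; ring|].
  change (length (a::l)) with (S (length l)). rewrite S_INR. simpl. rewrite IHl. ring.
Qed.

Lemma lsum_nonneg (h : R -> R) l : (forall x, In x l -> 0 <= h x) -> 0 <= lsum (map h l).
Proof.
  induction l; simpl; intros H; [lra|].
  pose proof (H a (or_introl eq_refl)). pose proof (IHl (fun x Hx => H x (or_intror Hx))). lra.
Qed.

Lemma lsum_map_le (h1 h2 : R -> R) l : (forall x, In x l -> h1 x <= h2 x) -> lsum (map h1 l) <= lsum (map h2 l).
Proof.
  induction l; simpl; intros H; [lra|].
  pose proof (H a (or_introl eq_refl)). pose proof (IHl (fun x Hx => H x (or_intror Hx))). lra.
Qed.

Lemma lsum_scale k l : lsum (map (fun x => k * x) l) = k * lsum l.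
Proof. induction l; simpl; [ring| rewrite IHl; ring]. Qed.

Lemma combine_repeat (u : R) (l : list R) :
  combine l (repeat u (length l)) = map (fun p => (p, u)) l.
Proof. induction l; simpl; [reflexivity| rewrite IHl; reflexivity]. Qed.

Lemma Df_unif f l n : length l = n -> (0 < INR n) ->
  Df f l (unif n) = / INR n * lsum (map (fun p => f (INR n * p)) l).
Proof.
  intros Hl Hn. unfold Df, unif. subst n. rewrite combine_repeat, map_map. simpl.
  rewrite <- lsum_scale, map_map. f_equal. apply map_ext. intro p.
  replace (p / (1 / INR (length l))) with (INR (length l) * p) by (field; lra). field. lra.
Qed.

Lemma fold_max_ge d l x : In x l -> x <= fold_right Rmax d l.
Proof.
  induction l; simpl; [tauto|]. intros [<-|H].
  - apply Rmax_l.
  - eapply Rle_trans; [apply IHl, H| apply Rmax_r].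
Qed.

Lemma fold_min_le d l x : In x l -> fold_right Rmin d l <= x.
Proof.
  induction l; simpl; [tauto|]. intros [<-|H].
  - apply Rmin_l.
  - eapply Rle_trans; [apply Rmin_r| apply IHl, H].
Qed.

Lemma fold_min_pos d l : 0 < d -> Forall (fun x => 0 < x) l -> 0 < fold_right Rmin d l.
Proof.
  intros Hd; induction 1; simpl; auto. apply Rmin_glb_lt; auto.
Qed.

Fixpoint ins (x : R) (l : list R) : list R :=
  match l with
  | [] => [x]
  | y :: l' => if Rle_dec y x then x :: l else y :: ins x l'
  end.

Lemma ins_perm x l : Permutation (x :: l) (ins x l).
Proof.
  induction l; simpl; auto. destruct (Rle_dec a x); auto.
  eapply perm_trans; [apply perm_swap| constructor; auto].
Qed.

Definition ge' := fun a b : R => b <= a.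

Lemma ins_hd y x l : HdRel ge' y l -> x <= y -> HdRel ge' y (ins x l).
Proof.
  destruct l; simpl; intros H Hx.
  - constructor. exact Hx.
  - destruct (Rle_dec r x); constructor; auto. inversion H; auto.
Qed.

Lemma ins_sorted x l : Sorted ge' l -> Sorted ge' (ins x l).
Proof.
  induction l; simpl; intros H; [repeat constructor|].
  destruct (Rle_dec a x).
  - constructor; auto.
  - inversion H; subst. constructor; auto. apply ins_hd; auto. unfold ge'; lra.
Qed.

Lemma sort_exists l : exists s, Permutation l s /\ Sorted ge' s.
Proof.
  induction l as [|x l IH]; [exists []; split; auto|].
  destruct IH as [s [Hp Hs]]. exists (ins x s). split.
  - eapply perm_trans; [constructor; exact Hp| apply ins_perm].
  - apply ins_sorted; auto.
Qed.

Lemma sorted_map (D : R -> Prop) (h : R -> R) l :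
  Sorted ge' l -> (forall x, In x l -> D x) ->
  (forall x y, D x -> D y -> y <= x -> h y <= h x) -> Sorted ge' (map h l).
Proof.
  intros Hs HD Hm. induction Hs; simpl; constructor.
  - apply IHHs. intros; apply HD; simpl; auto.
  - destruct H; simpl; constructor. apply Hm; auto; apply HD; simpl; auto.
Qed.

Lemma ss_last l z : StronglySorted ge' (l ++ [z]) -> forall x, In x l -> z <= x.
Proof.
  induction l; simpl; [tauto|]. intros H x [<-|Hx]; inversion H; subst.
  - rewrite Forall_forall in H3. apply H3, in_or_app; simpl; auto.
  - apply IHl; auto.
Qed.

Lemma ss_hd a l : StronglySorted ge' (a :: l) -> forall x, In x l -> x <= a.
Proof. intros H x Hx; inversion H; subst. rewrite Forall_forall in H3. apply H3, Hx. Qed.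

Fixpoint wsum (W : R -> R) (x y : list R) : R :=
  match x, y with
  | a :: x', b :: y' => W b * (a - b) + wsum W x' y'
  | _, _ => 0
  end.

Lemma lsum_cons a l : lsum (a :: l) = a + lsum l.
Proof. reflexivity. Qed.

Lemma abel W x : forall y s, length x = length y -> Sorted ge' (map W y) -> 0 <= s ->
  (forall k, lsum (firstn k y) <= s + lsum (firstn k x)) -> lsum y = s + lsum x ->
  - (hd 0 (map W y)) * s <= wsum W x y.
Proof.
  induction x as [|a x IH]; intros [|b y] s Hl Hs Hs0 Hk Ht; cbn [length map hd wsum] in *; try discriminate.
  - unfold lsum in Ht; simpl in Ht. subst; lra.
  - rewrite !lsum_cons in Ht.
    pose proof (Hk 1%nat) as H1. cbn [firstn] in H1. rewrite !lsum_cons in H1. change (lsum []) with 0 in H1.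
    assert (Hk' : forall k, lsum (firstn k y) <= (s + a - b) + lsum (firstn k x)).
    { intro k. pose proof (Hk (S k)) as H. cbn [firstn] in H. rewrite !lsum_cons in H. lra. }
    assert (IH' := IH y (s + a - b) ltac:(lia) ltac:(inversion Hs; auto) ltac:(lra) Hk' ltac:(lra)).
    destruct y as [|b' y].
    + destruct x; cbn [length] in Hl; try discriminate. cbn [wsum]. change (lsum []) with 0 in Ht. assert (s = b - a) by lra. subst s. lra.
    + cbn [map hd] in *. inversion Hs as [|? ? Hs1 Hs2]; subst. inversion Hs2 as [|? ? Hh]; subst. unfold ge' in Hh.
      assert (0 <= (W b - W b') * (s + a - b)) by (apply Rmult_le_pos; lra). nra.
Qed.

Lemma sum_ge W G x : forall y, length x = length y ->
  (forall a b, In a x -> In b y -> W b * (a - b) <= G a - G b) ->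
  wsum W x y <= lsum (map G x) - lsum (map G y).
Proof.
  induction x as [|a x IH]; intros [|b y] Hl H; cbn [length map wsum] in *; try discriminate; [unfold lsum; simpl; lra|].
  rewrite !lsum_cons.
  pose proof (H a b (or_introl eq_refl) (or_introl eq_refl)).
  pose proof (IH y ltac:(lia) (fun a b Ha Hb => H a b (or_intror Ha) (or_intror Hb))). lra.
Qed.


Lemma g1_mono (g g1 g2 : R -> R) (a b : R) (Hd : forall t, a <= t <= b -> derivable_pt_lim g t (g1 t) /\ derivable_pt_lim g1 t (g2 t) /\ 0 <= g2 t) u v : a <= u <= b -> a <= v <= b -> u <= v -> g1 u <= g1 v.
Proof.
  intros Hu Hv Huv. destruct (Req_dec u v) as [->|Hne]; [lra|].
  destruct (MVT_cor2 g1 g2 u v ltac:(lra) (fun c Hc => proj1 (proj2 (Hd c ltac:(lra))))) as [c [Hc1 Hc2]].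
  pose proof (proj2 (proj2 (Hd c ltac:(lra)))). nra.
Qed.

Lemma tangent (g g1 g2 : R -> R) (a b : R) (Hd : forall t, a <= t <= b -> derivable_pt_lim g t (g1 t) /\ derivable_pt_lim g1 t (g2 t) /\ 0 <= g2 t) u v : a <= u <= b -> a <= v <= b -> g1 v * (u - v) <= g u - g v.
Proof.
  intros Hu Hv. destruct (Rtotal_order u v) as [Hlt|[->|Hgt]].
  - destruct (MVT_cor2 g g1 u v Hlt (fun c Hc => proj1 (Hd c ltac:(lra)))) as [c [Hc1 Hc2]].
    pose proof (g1_mono g g1 g2 a b Hd c v ltac:(lra) Hv ltac:(lra)). nra.
  - lra.
  - destruct (MVT_cor2 g g1 v u Hgt (fun c Hc => proj1 (Hd c ltac:(lra)))) as [c [Hc1 Hc2]].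
    pose proof (g1_mono g g1 g2 a b Hd v c Hv ltac:(lra) ltac:(lra)). nra.
Qed.

Lemma karamata (g g1 g2 : R -> R) (a b : R) (Hd : forall t, a <= t <= b -> derivable_pt_lim g t (g1 t) /\ derivable_pt_lim g1 t (g2 t) /\ 0 <= g2 t) x y : length x = length y -> Sorted ge' y ->
  (forall u, In u x -> a <= u <= b) -> (forall u, In u y -> a <= u <= b) ->
  (forall k, lsum (firstn k y) <= lsum (firstn k x)) -> lsum y = lsum x ->
  lsum (map g y) <= lsum (map g x).
Proof.
  intros Hl Hs Hx Hy Hk Ht.
  assert (Hs' : Sorted ge' (map g1 y)).
  { apply (sorted_map (fun t => a <= t <= b)); auto. intros; apply (g1_mono g g1 g2 a b Hd); auto. }
  pose proof (abel g1 x y 0 Hl Hs' (Rle_refl 0) ltac:(intro k; specialize (Hk k); lra) ltac:(lra)).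
  pose proof (sum_ge g1 g x y Hl ltac:(intros; apply (tangent g g1 g2 a b Hd); auto)). lra.
Qed.

Lemma f2_nonneg f f1 f2 : convex_pos f ->
  (forall x, 0 < x -> derivable_pt_lim f x (f1 x) /\ derivable_pt_lim f1 x (f2 x)) ->
  forall x, 0 < x -> 0 <= f2 x.
Proof.
  intros Hc Hd x Hx. destruct (Rle_lt_dec 0 (f2 x)) as [|Hneg]; auto. exfalso.
  destruct (proj2 (Hd x Hx) (- f2 x / 2) ltac:(lra)) as [del Hdel].
  set (h0 := Rmin (del/2) (x/2)).
  assert (Hh0 : 0 < h0) by (unfold h0; apply Rmin_glb_lt; pose proof (cond_pos del); lra).
  assert (Hh1 : h0 <= del/2) by apply Rmin_l. assert (Hh2 : h0 <= x/2) by apply Rmin_r.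
  pose proof (cond_pos del).
  assert (Hr : forall t, x < t < x + h0 -> f1 t < f1 x).
  { intros t Ht. specialize (Hdel (t - x) ltac:(lra) ltac:(rewrite Rabs_pos_eq; lra)).
    replace (x + (t - x)) with t in Hdel by ring.
    apply Rabs_def2 in Hdel. destruct Hdel as [Hd1 Hd2].
    assert (Hq : (f1 t - f1 x) / (t - x) < 0) by lra.
    assert (E : f1 t - f1 x = (f1 t - f1 x) / (t - x) * (t - x)) by (field; lra).
    assert ((f1 t - f1 x) / (t - x) * (t - x) < 0) by (apply Rmult_neg_pos; lra). lra. }
  assert (Hl : forall t, x - h0 < t < x -> f1 x < f1 t).
  { intros t Ht. specialize (Hdel (t - x) ltac:(lra) ltac:(rewrite Rabs_left; lra)).
    replace (x + (t - x)) with t in Hdel by ring.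
    apply Rabs_def2 in Hdel. destruct Hdel as [Hd1 Hd2].
    assert (Hq : (f1 t - f1 x) / (t - x) < 0) by lra.
    assert (E : f1 t - f1 x = (f1 t - f1 x) / (t - x) * (t - x)) by (field; lra).
    assert (0 < (f1 t - f1 x) / (t - x) * (t - x)) by nra. lra. }
  destruct (MVT_cor2 f f1 x (x + h0) ltac:(lra) (fun c Hc => proj1 (Hd c ltac:(lra)))) as [c1 [E1 H1]].
  destruct (MVT_cor2 f f1 (x - h0) x ltac:(lra) (fun c Hc => proj1 (Hd c ltac:(lra)))) as [c2 [E2 H2]].
  pose proof (Hr c1 H1). pose proof (Hl c2 H2).
  pose proof (Hc (x + h0) (x - h0) (1/2) ltac:(lra) ltac:(lra) ltac:(lra)) as HC.
  replace (1 / 2 * (x + h0) + (1 - 1 / 2) * (x - h0)) with x in HC by field.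
  nra.
Qed.

Lemma deriv_local f g x l : 0 < x -> (forall t, 0 < t -> f t = g t) ->
  derivable_pt_lim g x l -> derivable_pt_lim f x l.
Proof.
  intros Hx He Hg eps Heps. destruct (Hg eps Heps) as [del Hdel].
  assert (Hp : 0 < Rmin del x) by (apply Rmin_glb_lt; [apply cond_pos| lra]).
  exists (mkposreal _ Hp). intros h Hh Hhd. simpl in Hhd.
  assert (Habs := Rmin_l del x). assert (Habs2 := Rmin_r del x).
  rewrite (He (x + h)), (He x); try lra.
  - apply Hdel; auto. lra.
  - apply Rabs_def2 in Hhd. lra.
Qed.

Lemma lsum_lin' (h k : R -> R) al be ga de l :
  (forall x, In x l -> k x = al * h x + be * (x*x) + ga * x + de) ->
  lsum (map k l) = al * lsum (map h l) + be * sqnorm2 l + ga * lsum l + de * INR (length l).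
Proof. intros H. rewrite <- lsum_lin. f_equal. apply map_ext_in. exact H. Qed.

Lemma firstn_app_len (l m : list R) : firstn (length l) (l ++ m) = l.
Proof. induction l; simpl; [reflexivity| now rewrite IHl]. Qed.

Lemma sqnorm2_perm (l l' : list R) : Permutation l l' -> sqnorm2 l = sqnorm2 l'.
Proof. intros; apply lsum_perm, Permutation_map; auto. Qed.

Lemma lsum_map_perm (h : R -> R) (l l' : list R) : Permutation l l' -> lsum (map h l) = lsum (map h l').
Proof. intros; apply lsum_perm, Permutation_map; auto. Qed.

Lemma ge'_trans : Relations_1.Transitive ge'.
Proof. unfold Relations_1.Transitive, ge'. intros; lra. Qed.

Lemma sorted_bounds (sP sQ : list R) m M :
  length sP = length sQ -> (0 < length sP)%nat ->
  Sorted ge' sP -> Sorted ge' sQ ->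
  (forall k, lsum (firstn k sP) <= lsum (firstn k sQ)) -> lsum sP = lsum sQ ->
  (forall u, In u sQ -> m <= u <= M) -> forall u, In u sP -> m <= u <= M.
Proof.
  intros Hl Hpos HsP HsQ Hk Ht HQ u Hu.
  assert (SP := Sorted_StronglySorted ge'_trans HsP).
  split.
  - destruct (exists_last (l := sP) ltac:(intro E; subst; simpl in Hpos; lia)) as [lP [zP EP]].
    destruct (exists_last (l := sQ) ltac:(intro E; subst; simpl in Hl; rewrite <- Hl in Hpos; simpl in Hpos; lia)) as [lQ [zQ EQ]].
    subst sP sQ. rewrite !length_app in Hl; simpl in Hl.
    pose proof (Hk (length lP)) as H. rewrite firstn_app_len in H.
    replace (length lP) with (length lQ) in H by lia. rewrite firstn_app_len in H.
    rewrite !lsum_app in Ht. simpl in Ht. change (lsum [zP]) with (zP + 0) in Ht. change (lsum [zQ]) with (zQ + 0) in Ht.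
    assert (HzQ := HQ zQ ltac:(apply in_or_app; simpl; auto)).
    apply in_app_or in Hu. destruct Hu as [Hu|[<-|[]]].
    + pose proof (ss_last lP zP SP u Hu). lra.
    + lra.
  - destruct sP as [|h sP']; simpl in Hpos; [lia|]. destruct sQ as [|hQ sQ']; simpl in Hl; [lia|].
    pose proof (Hk 1%nat) as H. change (lsum [h] <= lsum [hQ]) in H. change (lsum [h]) with (h+0) in H. change (lsum [hQ]) with (hQ+0) in H.
    assert (HhQ := HQ hQ ltac:(simpl; auto)).
    destruct Hu as [<-|Hu].
    + lra.
    + pose proof (ss_hd h sP' SP u Hu). lra.
Qed.

Lemma alg_bound rho x y : 1 <= rho -> x <= rho * y -> 0 <= 1 - y ->
  4 * rho * ((x - 1) * (1 - y)) <= (rho - 1) ^ 2.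
Proof.
  intros H1 H2 H3.
  assert (0 <= (rho * y - x) * (1 - y)) by (apply Rmult_le_pos; lra).
  assert (0 <= (2 * rho * y - rho - 1) ^ 2) by (apply pow2_ge_0).
  assert (E : (rho - 1) ^ 2 - 4 * rho * ((rho * y - 1) * (1 - y)) = (2 * rho * y - rho - 1) ^ 2) by ring.
  assert (4 * rho * ((x - 1) * (1 - y)) <= 4 * rho * ((rho * y - 1) * (1 - y))).
  { apply Rmult_le_compat_l; [lra|]. nra. }
  lra.
Qed.

Theorem theorem6 (n : nat) (P Q : list R) (f f1 f2 : R -> R) :
  pos_pmf n P -> pos_pmf n Q -> majorized P Q ->
  convex_pos f ->
  (forall x, 0 < x -> derivable_pt_lim f x (f1 x) /\ derivable_pt_lim f1 x (f2 x)) ->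
  f 1 = 0 ->
  let qmax := lmax Q in
  let qmin := lmin Q in
  let d := sqnorm2 Q - sqnorm2 P in
  let D := Df f Q (unif n) - Df f P (unif n) in
  (* (a) *)
  ((exists c, is_cf f2 (INR n * qmin) (INR n * qmax) c) /\
   (forall e, is_ef f2 (INR n * qmin) (INR n * qmax) e -> INR n * e * d >= D) /\
   (forall c, is_cf f2 (INR n * qmin) (INR n * qmax) c -> D >= INR n * c * d) /\
   0 <= d /\
   ((forall t, 0 < t -> f t = (t - 1) ^ 2) ->
      (forall e, is_ef f2 (INR n * qmin) (INR n * qmax) e -> INR n * e * d = D) /\
      (forall c, is_cf f2 (INR n * qmin) (INR n * qmax) c -> D = INR n * c * d))) /\
  (* (b) *)
  (forall rho, 1 <= rho -> qmax / qmin <= rho ->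
     0 <= d /\ d <= (rho - 1) ^ 2 / (4 * rho * INR n)).
Proof.
  intros [HPl [HPpos HPs]] [HQl [HQpos HQs]] Hmaj Hconv Hd Hf1 qmax qmin d D.
  assert (Eqmax : qmax = lmax Q) by reflexivity.
  assert (Eqmin : qmin = lmin Q) by reflexivity.
  assert (Ed : d = sqnorm2 Q - sqnorm2 P) by reflexivity.
  assert (ED : D = Df f Q (unif n) - Df f P (unif n)) by reflexivity.
  clearbody qmax qmin d D.
  assert (EQ : exists q0 Q', Q = q0 :: Q').
  { destruct Q as [|q0 Q']; [unfold lsum in HQs; simpl in HQs; lra| eauto]. }
  destruct EQ as [q0 [Q' EQ]].
  assert (Hn1 : (1 <= n)%nat) by (rewrite <- HQl, EQ; simpl; lia).
  assert (Hn : 0 < INR n) by (apply lt_0_INR; lia).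
  assert (HQb : forall u, In u Q -> qmin <= u <= qmax).
  { intros u Hu. rewrite Eqmin, Eqmax. split; [apply fold_min_le| apply fold_max_ge]; auto. }
  assert (Hqmin : 0 < qmin).
  { rewrite Eqmin. unfold lmin. apply fold_min_pos; auto. rewrite EQ; simpl.
    rewrite EQ in HQpos. inversion HQpos; auto. }
  assert (Hq0 : In q0 Q) by (rewrite EQ; simpl; auto).
  assert (Hmm : qmin <= qmax) by (pose proof (HQb q0 Hq0); lra).
  destruct (sort_exists P) as [sP [HpP HsP]].
  destruct (sort_exists Q) as [sQ [HpQ HsQ]].
  assert (Hk : forall k, lsum (firstn k sP) <= lsum (firstn k sQ)).
  { apply Hmaj; split; auto. }
  assert (HtP : lsum sP = 1) by (rewrite <- (lsum_perm _ _ HpP); auto).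
  assert (HtQ : lsum sQ = 1) by (rewrite <- (lsum_perm _ _ HpQ); auto).
  assert (HlP : length sP = n) by (rewrite <- (Permutation_length HpP); auto).
  assert (HlQ : length sQ = n) by (rewrite <- (Permutation_length HpQ); auto).
  assert (HsQb : forall u, In u sQ -> qmin <= u <= qmax).
  { intros u Hu; apply HQb. apply (Permutation_in _ (Permutation_sym HpQ) Hu). }
  assert (HsPb : forall u, In u sP -> qmin <= u <= qmax).
  { apply (sorted_bounds sP sQ); auto; try lia; try lra. }
  set (a := INR n * qmin). set (b := INR n * qmax).
  assert (Ha : 0 < a) by (unfold a; nra).
  assert (Hab : a <= b) by (unfold a, b; nra).
  assert (K : forall g g1 g2 : R -> R,
    (forall t, a <= t <= b -> derivable_pt_lim g t (g1 t) /\ derivable_pt_lim g1 t (g2 t) /\ 0 <= g2 t) ->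
    lsum (map (fun p => g (INR n * p)) sP) <= lsum (map (fun q => g (INR n * q)) sQ)).
  { intros g g1 g2 Hg.
    rewrite <- (map_map (fun p => INR n * p) g sP), <- (map_map (fun p => INR n * p) g sQ).
    apply (karamata g g1 g2 a b Hg).
    - rewrite !length_map; lia.
    - apply (sorted_map (fun _ => True)); auto. intros; nra.
    - intros u Hu. apply in_map_iff in Hu. destruct Hu as [q [<- Hq]].
      pose proof (HsQb q Hq). unfold a, b; split; nra.
    - intros u Hu. apply in_map_iff in Hu. destruct Hu as [q [<- Hq]].
      pose proof (HsPb q Hq). unfold a, b; split; nra.
    - intro k. rewrite !firstn_map, !lsum_scale. pose proof (Hk k). nra.
    - rewrite !lsum_scale, HtP, HtQ. reflexivity. }
  set (FP := lsum (map (fun p => f (INR n * p)) P)).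
  set (FQ := lsum (map (fun p => f (INR n * p)) Q)).
  assert (ED' : D = / INR n * FQ - / INR n * FP).
  { rewrite ED, !Df_unif; auto. }
  assert (EFP : lsum (map (fun p => f (INR n * p)) sP) = FP) by (symmetry; apply lsum_map_perm; auto).
  assert (EFQ : lsum (map (fun p => f (INR n * p)) sQ) = FQ) by (symmetry; apply lsum_map_perm; auto).
  assert (ESP : sqnorm2 sP = sqnorm2 P) by (symmetry; apply sqnorm2_perm; auto).
  assert (ESQ : sqnorm2 sQ = sqnorm2 Q) by (symmetry; apply sqnorm2_perm; auto).
  assert (Dsq : forall (k t : R), derivable_pt_lim (fun u => k * (u * u)) t (k * (2 * t))).
  { intros k t. exact (derivable_pt_lim_scal Rsqr k t _ (derivable_pt_lim_Rsqr t)). }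
  assert (Dlin : forall (k t : R), derivable_pt_lim (fun u => k * (2 * u)) t (k * (2 * 1))).
  { intros k t. exact (derivable_pt_lim_scal _ k t _ (derivable_pt_lim_scal id 2 t _ (derivable_pt_lim_id t))). }
  assert (Hdpos : forall t, a <= t <= b -> 0 < t) by (intros; lra).
  assert (Hd0 : 0 <= d).
  { pose proof (K (fun u => 1 * (u * u)) (fun u => 1 * (2 * u)) (fun _ => 1 * (2 * 1))
       ltac:(intros t Ht; split; [apply Dsq| split; [apply Dlin| lra]])) as HK.
    cbv beta in HK.
    rewrite (lsum_lin' (fun _ => 0) (fun p => 1 * (INR n * p * (INR n * p))) 0 (INR n * INR n) 0 0 sP ltac:(intros; cbv beta; ring)) in HK.
    rewrite (lsum_lin' (fun _ => 0) (fun p => 1 * (INR n * p * (INR n * p))) 0 (INR n * INR n) 0 0 sQ ltac:(intros; cbv beta; ring)) in HK.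
    rewrite ESP, ESQ in HK. rewrite Ed.
    assert (0 < INR n * INR n) by nra. nra. }
  assert (Hup : forall e, (forall t, a <= t <= b -> f2 t <= 2 * e) -> D <= INR n * e * d).
  { intros e He.
    pose proof (K (fun u => e * (u * u) - f u) (fun u => e * (2 * u) - f1 u) (fun u => e * (2 * 1) - f2 u)) as HK.
    assert (HK' := HK ltac:(intros t Ht; split; [| split];
      [ exact (derivable_pt_lim_minus _ f t _ _ (Dsq e t) (proj1 (Hd t (Hdpos t Ht))))
      | exact (derivable_pt_lim_minus _ f1 t _ _ (Dlin e t) (proj2 (Hd t (Hdpos t Ht))))
      | pose proof (He t Ht); lra])). clear HK. cbv beta in HK'.
    rewrite (lsum_lin' (fun p => f (INR n * p)) (fun p => e * (INR n * p * (INR n * p)) - f (INR n * p)) (-1) (e * INR n * INR n) 0 0 sP ltac:(intros; cbv beta; ring)) in HK'.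
    rewrite (lsum_lin' (fun p => f (INR n * p)) (fun p => e * (INR n * p * (INR n * p)) - f (INR n * p)) (-1) (e * INR n * INR n) 0 0 sQ ltac:(intros; cbv beta; ring)) in HK'.
    rewrite EFP, EFQ, ESP, ESQ in HK'.
    assert (FQ - FP <= INR n * INR n * (e * d)) by (rewrite Ed; lra).
    rewrite ED'. replace (INR n * e * d) with (/ INR n * (INR n * INR n * (e * d))) by (field; lra).
    rewrite <- Rmult_minus_distr_l. apply Rmult_le_compat_l; [left; apply Rinv_0_lt_compat; lra| lra]. }
  assert (Hlow : forall c, (forall t, a <= t <= b -> 2 * c <= f2 t) -> INR n * c * d <= D).
  { intros c Hc.
    pose proof (K (fun u => f u - c * (u * u)) (fun u => f1 u - c * (2 * u)) (fun u => f2 u - c * (2 * 1))) as HK.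
    assert (HK' := HK ltac:(intros t Ht; split; [| split];
      [ exact (derivable_pt_lim_minus f _ t _ _ (proj1 (Hd t (Hdpos t Ht))) (Dsq c t))
      | exact (derivable_pt_lim_minus f1 _ t _ _ (proj2 (Hd t (Hdpos t Ht))) (Dlin c t))
      | pose proof (Hc t Ht); lra])). clear HK. cbv beta in HK'.
    rewrite (lsum_lin' (fun p => f (INR n * p)) (fun p => f (INR n * p) - c * (INR n * p * (INR n * p))) 1 (- c * INR n * INR n) 0 0 sP ltac:(intros; cbv beta; ring)) in HK'.
    rewrite (lsum_lin' (fun p => f (INR n * p)) (fun p => f (INR n * p) - c * (INR n * p * (INR n * p))) 1 (- c * INR n * INR n) 0 0 sQ ltac:(intros; cbv beta; ring)) in HK'.
    rewrite EFP, EFQ, ESP, ESQ in HK'.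
    assert (INR n * INR n * (c * d) <= FQ - FP) by (rewrite Ed; lra).
    rewrite ED'. replace (INR n * c * d) with (/ INR n * (INR n * INR n * (c * d))) by (field; lra).
    rewrite <- Rmult_minus_distr_l. apply Rmult_le_compat_l; [left; apply Rinv_0_lt_compat; lra| lra]. }
  assert (Hf2 := f2_nonneg f f1 f2 Hconv Hd).
  assert (HIa : Iset a b a) by (split; lra).
  split; [split; [| split; [| split; [| split]]] |].
  -
    set (E := fun y => exists t, Iset a b t /\ y = f2 t).
    destruct (completeness (fun y => E (- y))) as [m [Hm1 Hm2]].
    + exists 0. intros y [t [[Ht1 Ht2] Ey]]. pose proof (Hf2 t Ht2). lra.
    + exists (- f2 a). exists a. split; auto. ring.
    + exists (- m / 2). split.
      * intros x Ex. replace (2 * (- m / 2)) with (- m) by field.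
        assert (x' : E (- - x)) by (rewrite Ropp_involutive; auto).
        pose proof (Hm1 (- x) x'). lra.
      * intros b' Hb'. replace (2 * (- m / 2)) with (- m) by field.
        assert (m <= - b'); [| lra]. apply Hm2. intros y Ey. pose proof (Hb' _ Ey). lra.
  - intros e [He1 He2]. apply Rle_ge, Hup. intros t Ht. apply He1. exists t; split; [split; [lra|]; apply Hdpos; auto| reflexivity].
  - intros c [Hc1 Hc2]. apply Rle_ge, Hlow. intros t Ht. apply Hc1. exists t; split; [split; [lra|]; apply Hdpos; auto| reflexivity].
  - exact Hd0.
  - intros Hchi.
    assert (Hf1e : forall x, 0 < x -> f1 x = 2 * x - 2 * 1 + 0).
    { intros x Hx. apply (uniqueness_limite f x).
      - apply Hd; auto.
      - apply (deriv_local f (Rsqr - mult_real_fct 2 id + fct_cte 1)%F x); auto.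
        + intros t Ht. rewrite Hchi; auto. unfold plus_fct, minus_fct, mult_real_fct, Rsqr, fct_cte, id. ring.
        + apply derivable_pt_lim_plus; [apply derivable_pt_lim_minus|].
          * apply derivable_pt_lim_Rsqr.
          * apply derivable_pt_lim_scal, derivable_pt_lim_id.
          * apply derivable_pt_lim_const. }
    assert (Hf2e : forall x, 0 < x -> f2 x = 2 * 1 - 0).
    { intros x Hx. apply (uniqueness_limite f1 x).
      - apply Hd; auto.
      - apply (deriv_local f1 (mult_real_fct 2 id - fct_cte 2)%F x); auto.
        + intros t Ht. rewrite Hf1e; auto. unfold minus_fct, mult_real_fct, fct_cte, id. ring.
        + apply derivable_pt_lim_minus.
          * apply derivable_pt_lim_scal, derivable_pt_lim_id.
          * apply derivable_pt_lim_const. }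
    assert (HD : D = INR n * d).
    { assert (HF : forall l, Forall (fun x => 0 < x) l ->
         lsum (map (fun p => f (INR n * p)) l) = INR n * INR n * sqnorm2 l + (-2 * INR n) * lsum l + 1 * INR (length l)).
      { intros l Hl. rewrite (lsum_lin' (fun _ => 0) (fun p => f (INR n * p)) 0 (INR n * INR n) (-2 * INR n) 1 l).
        - ring.
        - intros x Hx. rewrite Forall_forall in Hl. rewrite Hchi; [ring| specialize (Hl x Hx); nra]. }
      rewrite ED'. unfold FP, FQ. rewrite !HF; auto. rewrite HPl, HQl, HPs, HQs, Ed. field. lra. }
    split.
    + intros e [He1 He2].
      assert (2 <= 2 * e) by (apply He1; exists a; split; auto; rewrite Hf2e; lra).
      assert (2 * e <= 2) by (apply He2; intros y [t [[_ Ht] ->]]; rewrite Hf2e; lra).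
      assert (e = 1) by lra. subst e. rewrite HD. ring.
    + intros c [Hc1 Hc2].
      assert (2 * c <= 2) by (apply Hc1; exists a; split; auto; rewrite Hf2e; lra).
      assert (2 <= 2 * c) by (apply Hc2; intros y [t [[_ Ht] ->]]; rewrite Hf2e; lra).
      assert (c = 1) by lra. subst c. rewrite HD. ring.
  - intros rho Hrho Hratio. split; auto.
    set (M := qmax) in *. set (m := qmin) in *. set (u := / INR n).
    assert (Hun : u * INR n = 1) by (unfold u; field; lra).
    assert (Hu : 0 < u) by (unfold u; apply Rinv_0_lt_compat; lra).
    assert (HMr : M <= rho * m).
    { replace M with (M / m * m) by (field; lra). apply Rmult_le_compat_r; lra. }
    assert (HSP : 0 <= sqnorm2 P - 2 * u * 1 + u * u * INR n).
    { pose proof (lsum_lin' (fun _ => 0) (fun x => (x - u) * (x - u)) 0 1 (-2*u) (u*u) P ltac:(intros; cbv beta; ring)) as E.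
      assert (N : 0 <= lsum (map (fun x => (x - u) * (x - u)) P)) by (apply lsum_nonneg; intros; cbv beta; apply Rle_0_sqr).
      rewrite HPs, HPl in E. nra. }
    assert (HSQ : 0 <= - sqnorm2 Q + (M + m) * 1 - M * m * INR n).
    { pose proof (lsum_lin' (fun _ => 0) (fun x => (M - x) * (x - m)) 0 (-1) (M + m) (- (M * m)) Q ltac:(intros; cbv beta; ring)) as E.
      assert (N : 0 <= lsum (map (fun x => (M - x) * (x - m)) Q)) by (apply lsum_nonneg; intros x Hx; cbv beta; pose proof (HQb x Hx) as HH; nra).
      rewrite HQs, HQl in E. nra. }
    assert (Hm1 : 0 <= 1 - m * INR n).
    { pose proof (lsum_lin' (fun _ => 0) (fun x => x - m) 0 0 1 (- m) Q ltac:(intros; cbv beta; ring)) as E.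
      assert (N : 0 <= lsum (map (fun x => x - m) Q)) by (apply lsum_nonneg; intros x Hx; cbv beta; pose proof (HQb x Hx) as HH; lra).
      rewrite HQs, HQl in E. nra. }
    assert (HM1 : 0 <= M * INR n - 1).
    { pose proof (lsum_lin' (fun _ => 0) (fun x => M - x) 0 0 (-1) M Q ltac:(intros; cbv beta; ring)) as E.
      assert (N : 0 <= lsum (map (fun x => M - x) Q)) by (apply lsum_nonneg; intros x Hx; cbv beta; pose proof (HQb x Hx) as HH; lra).
      rewrite HQs, HQl in E. nra. }
    set (x := M * INR n) in *. set (y := m * INR n) in *.
    assert (HK : 4 * rho * ((x - 1) * (1 - y)) <= (rho - 1) ^ 2).
    { apply alg_bound; [lra| | lra].
      unfold x, y. rewrite <- Rmult_assoc. apply Rmult_le_compat_r; lra. }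
    assert (Hdle : d <= (x - 1) * (1 - y) * u).
    { rewrite Ed. unfold x, y.
      replace ((M * INR n - 1) * (1 - m * INR n) * u) with (M * (u * INR n) + m * (u * INR n) - M * m * INR n * (u * INR n) - u) by ring.
      rewrite Hun. nra. }
    replace ((rho - 1) ^ 2 / (4 * rho * INR n)) with ((rho - 1) ^ 2 / (4 * rho) * u) by (unfold u; field; lra).
    apply (Rle_trans _ _ _ Hdle). apply Rmult_le_compat_r; [lra|].
    apply (Rmult_le_reg_l (4 * rho)); [lra|]. replace (4 * rho * ((rho - 1) ^ 2 / (4 * rho))) with ((rho-1)^2) by (field; lra). exact HK.
Qed.
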